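(* Let $(B,\nu_B)$ be as in the context and let $\varphi,\psi:B\to S^1$ be measurable maps such that (1) $\varphi_*\nu_B$ and $\psi_*\nu_B$ have no atoms; (2) the essential images of $\varphi$ and $\psi$ both equal $S^1$; (3) $o(\varphi(x),\varphi(y),\varphi(z))=o(\psi(x),\psi(y),\psi(z))$ for almost every $(x,y,z)\in B^3$. Then the essential image $F\subset S^1\times S^1$ of the map $x\mapsto(\varphi(x),\psi(x))$ is the graph of an orientation preserving homeomorphism $h:S^1\to S^1$, and $h(\varphi(x))=\psi(x)$ for almost every $x\in B$.
   Context: $(B,\nu_B)$ is a standard Lebesgue probability space (in the paper, a $G$-space for a locally compact second countable group $G$ with $\mu$-stationary, doubly ergodic, amenable action). The essential image of a measurable map into a compact metric space is the support of the pushforward of $\nu_B$. The orientation cocycle $o:(S^1)^3\to\{-1,0,1\}$ is $1$ on positively oriented triples, $-1$ on negatively oriented triples, and $0$ if the points are not pairwise distinct. *)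

(* Defs.v *)
From HB Require Import structures.
From mathcomp Require Import all_boot all_order all_algebra.
From mathcomp Require Import all_classical all_reals all_analysis.
Set Implicit Arguments. Unset Strict Implicit. Unset Printing Implicit Defensive.
Import Order.TTheory GRing.Theory Num.Theory.
Import numFieldNormedType.Exports.
Local Open Scope classical_set_scope.
Local Open Scope ring_scope.

Definition S1 (R : realType) : set (R * R) := [set p | p.1 ^+ 2 + p.2 ^+ 2 = 1].
Arguments S1 R : clear implicits.

(* For points of S1 it is 1 on counterclockwise (positively oriented)
   triples, -1 on clockwise ones, and 0 iff the points are not pairwise
   distinct (three distinct points of a circle are never collinear). *)
Definition orient (R : realType) (a b c : R * R) : R :=
  Num.sg ((b.1 - a.1) * (c.2 - a.2) - (b.2 - a.2) * (c.1 - a.1)).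

(* Essential image of a map f : T -> X (X a topological space):
   the support of the push-forward measure f_* mu. *)
Definition ess_image d (T : measurableType d) (R : realType)
  (mu : set T -> \bar R) (X : topologicalType) (f : T -> X) : set X :=
  [set p | forall U : set X, open U -> U p -> (0 < mu (f @^-1` U))%E].

Definition S1_homeo (R : realType) (h : R * R -> R * R) : Prop :=
  (forall p, S1 R p -> S1 R (h p)) /\
  {within S1 R, continuous h} /\
  exists g : R * R -> R * R,
    [/\ forall p, S1 R p -> S1 R (g p),
        {within S1 R, continuous g},
        forall p, S1 R p -> g (h p) = p &
        forall p, S1 R p -> h (g p) = p].

Definition S1_orientation_preserving (R : realType) (h : R * R -> R * R) : Prop :=
  forall a b c, S1 R a -> S1 R b -> S1 R c ->
    orient (h a) (h b) (h c) = orient a b c.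

(* Main.v *)
Require Import Defs.
From HB Require Import structures.
From mathcomp Require Import all_boot all_order all_algebra.
From mathcomp Require Import all_classical all_reals all_analysis.
From mathcomp Require Import measurable_realfun.
From mathcomp Require Import ring lra.
Import Order.TTheory GRing.Theory Num.Theory.
Import numFieldNormedType.Exports.
Local Open Scope classical_set_scope.
Local Open Scope ring_scope.
Section Geo. Variable R : realType.
Definition Dd (a b c : R * R) : R :=
  (b.1 - a.1) * (c.2 - a.2) - (b.2 - a.2) * (c.1 - a.1).
Lemma orientE a b c : orient a b c = Num.sg (Dd a b c). Proof. by []. Qed.

Lemma Dd_cont : continuous (fun t : (R * R) * (R * R) * (R * R) => Dd t.1.1 t.1.2 t.2).
Proof.
move=> t.
have f1 : {for t, continuous (fun t : (R * R) * (R * R) * (R * R) => t.1)} by exact: cvg_fst.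
have f2 : {for t, continuous (fun t : (R * R) * (R * R) * (R * R) => t.2)} by exact: cvg_snd.
have g1 : forall u : R * R * (R * R), {for u, continuous (fun u : R * R * (R * R) => u.1)} by move=> u; exact: cvg_fst.
have g2 : forall u : R * R * (R * R), {for u, continuous (fun u : R * R * (R * R) => u.2)} by move=> u; exact: cvg_snd.
have k1 : forall u : R * R, {for u, continuous (fun u : R * R => u.1)} by move=> u; exact: cvg_fst.
have k2 : forall u : R * R, {for u, continuous (fun u : R * R => u.2)} by move=> u; exact: cvg_snd.
have a1 : {for t, continuous (fun t : (R * R) * (R * R) * (R * R) => t.1.1.1)}.
  exact: (continuous_comp (continuous_comp f1 (g1 _)) (k1 _)).
have a2 : {for t, continuous (fun t : (R * R) * (R * R) * (R * R) => t.1.1.2)}.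
  exact: (continuous_comp (continuous_comp f1 (g1 _)) (k2 _)).
have b1 : {for t, continuous (fun t : (R * R) * (R * R) * (R * R) => t.1.2.1)}.
  exact: (continuous_comp (continuous_comp f1 (g2 _)) (k1 _)).
have b2 : {for t, continuous (fun t : (R * R) * (R * R) * (R * R) => t.1.2.2)}.
  exact: (continuous_comp (continuous_comp f1 (g2 _)) (k2 _)).
have c1 : {for t, continuous (fun t : (R * R) * (R * R) * (R * R) => t.2.1)}.
  exact: (continuous_comp f2 (k1 _)).
have c2 : {for t, continuous (fun t : (R * R) * (R * R) * (R * R) => t.2.2)}.
  exact: (continuous_comp f2 (k2 _)).
rewrite /Dd.
apply: (@continuousB _ _ _ (fun t : (R * R) * (R * R) * (R * R) => (t.1.2.1 - t.1.1.1) * (t.2.2 - t.1.1.2))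
   (fun t : (R * R) * (R * R) * (R * R) => (t.1.2.2 - t.1.1.2) * (t.2.1 - t.1.1.1))).
  apply: (@continuousM _ _ (fun t : (R * R) * (R * R) * (R * R) => (t.1.2.1 - t.1.1.1)) (fun t : (R * R) * (R * R) * (R * R) => (t.2.2 - t.1.1.2))).
    exact: (@continuousB _ _ _ (fun t : (R * R) * (R * R) * (R * R) => t.1.2.1) (fun t : (R * R) * (R * R) * (R * R) => t.1.1.1)).
  exact: (@continuousB _ _ _ (fun t : (R * R) * (R * R) * (R * R) => t.2.2) (fun t : (R * R) * (R * R) * (R * R) => t.1.1.2)).
apply: (@continuousM _ _ (fun t : (R * R) * (R * R) * (R * R) => (t.1.2.2 - t.1.1.2)) (fun t : (R * R) * (R * R) * (R * R) => (t.2.1 - t.1.1.1))).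
  exact: (@continuousB _ _ _ (fun t : (R * R) * (R * R) * (R * R) => t.1.2.2) (fun t : (R * R) * (R * R) * (R * R) => t.1.1.2)).
exact: (@continuousB _ _ _ (fun t : (R * R) * (R * R) * (R * R) => t.2.1) (fun t : (R * R) * (R * R) * (R * R) => t.1.1.1)).
Qed.

Lemma orient_near a b c : Dd a b c != 0 -> exists e : R, 0 < e /\
  forall a' b' c', ball a e a' -> ball b e b' -> ball c e c' ->
    orient a' b' c' = orient a b c.
Proof.
move=> D0.
set t0 : (R * R) * (R * R) * (R * R) := (a, b, c).
have cv := Dd_cont t0.
have : \forall t \near t0, Num.sg (Dd t.1.1 t.1.2 t.2) = Num.sg (Dd a b c).
  have [Dp|Dn] := ltP 0 (Dd a b c).
    near=> t. rewrite (gtr0_sg Dp) gtr0_sg //.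
    near: t. exact: (cvgr_gt _ cv).
  have Dn' : Dd a b c < 0 by rewrite lt_neqAle D0 Dn.
  near=> t. rewrite (ltr0_sg Dn') ltr0_sg //.
  near: t. exact: (cvgr_lt _ cv).
move/nbhs_ballP => [e e0 He]; exists e; split => // a' b' c' ha hb hc.
exact: (He (a', b', c')).
Unshelve. all: by end_near.
Qed.
Lemma sumsq0 (x y : R) : x ^+ 2 + y ^+ 2 = 0 -> x = 0 /\ y = 0.
Proof.
move=> h; have hx : x ^+ 2 = 0 by have := sqr_ge0 x; have := sqr_ge0 y; lra.
have hy : y ^+ 2 = 0 by have := sqr_ge0 x; have := sqr_ge0 y; lra.
by move/eqP: hx; move/eqP: hy; rewrite !sqrf_eq0 => /eqP -> /eqP ->.
Qed.

Lemma circ_D0 a b c : S1 R a -> S1 R b -> S1 R c -> Dd a b c = 0 ->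
  a = b \/ b = c \/ a = c.
Proof.
case: a => a1 a2; case: b => b1 b2; case: c => c1 c2; rewrite /S1 /Dd /= => ha hb hc hD.
set u1 := b1 - a1; set u2 := b2 - a2; set v1 := c1 - a1; set v2 := c2 - a2.
have hu : 2 * (a1 * u1 + a2 * u2) + (u1 ^+ 2 + u2 ^+ 2) = 0.
  rewrite /u1 /u2; rewrite -hb in ha. lra.
have hv : 2 * (a1 * v1 + a2 * v2) + (v1 ^+ 2 + v2 ^+ 2) = 0.
  rewrite /v1 /v2; rewrite -hc in ha. lra.
have hD' : u1 * v2 - u2 * v1 = 0 by [].
have e1 : (v1 ^+ 2 + v2 ^+ 2) * u1 - (u1 * v1 + u2 * v2) * v1 = v2 * (u1 * v2 - u2 * v1) by ring.
have e2 : (v1 ^+ 2 + v2 ^+ 2) * u2 - (u1 * v1 + u2 * v2) * v2 = - v1 * (u1 * v2 - u2 * v1) by ring.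
rewrite hD' mulr0 in e1 e2.
have f1 : (u1 ^+ 2 + u2 ^+ 2) * v1 - (u1 * v1 + u2 * v2) * u1 = - u2 * (u1 * v2 - u2 * v1) by ring.
have f2 : (u1 ^+ 2 + u2 ^+ 2) * v2 - (u1 * v1 + u2 * v2) * u2 = u1 * (u1 * v2 - u2 * v1) by ring.
rewrite hD' mulr0 in f1 f2.
have g1 : (v1 ^+ 2 + v2 ^+ 2) * ((u1 * v1 + u2 * v2) - (u1 ^+ 2 + u2 ^+ 2)) = 0.
  have : a1 * ((v1 ^+ 2 + v2 ^+ 2) * u1 - (u1 * v1 + u2 * v2) * v1) +
         a2 * ((v1 ^+ 2 + v2 ^+ 2) * u2 - (u1 * v1 + u2 * v2) * v2) = 0
    by rewrite e1 e2; ring.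
  move=> H.
  have -> : (v1 ^+ 2 + v2 ^+ 2) * ((u1 * v1 + u2 * v2) - (u1 ^+ 2 + u2 ^+ 2)) =
    2 * (a1 * ((v1 ^+ 2 + v2 ^+ 2) * u1 - (u1 * v1 + u2 * v2) * v1) +
         a2 * ((v1 ^+ 2 + v2 ^+ 2) * u2 - (u1 * v1 + u2 * v2) * v2))
    - (v1 ^+ 2 + v2 ^+ 2) * (2 * (a1 * u1 + a2 * u2) + (u1 ^+ 2 + u2 ^+ 2))
    + (u1 * v1 + u2 * v2) * (2 * (a1 * v1 + a2 * v2) + (v1 ^+ 2 + v2 ^+ 2)) by ring.
  by rewrite H hu hv; ring.
have g2 : (u1 ^+ 2 + u2 ^+ 2) * ((u1 * v1 + u2 * v2) - (v1 ^+ 2 + v2 ^+ 2)) = 0.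
  have : a1 * ((u1 ^+ 2 + u2 ^+ 2) * v1 - (u1 * v1 + u2 * v2) * u1) +
         a2 * ((u1 ^+ 2 + u2 ^+ 2) * v2 - (u1 * v1 + u2 * v2) * u2) = 0
    by rewrite f1 f2; ring.
  move=> H.
  have -> : (u1 ^+ 2 + u2 ^+ 2) * ((u1 * v1 + u2 * v2) - (v1 ^+ 2 + v2 ^+ 2)) =
    2 * (a1 * ((u1 ^+ 2 + u2 ^+ 2) * v1 - (u1 * v1 + u2 * v2) * u1) +
         a2 * ((u1 ^+ 2 + u2 ^+ 2) * v2 - (u1 * v1 + u2 * v2) * u2))
    - (u1 ^+ 2 + u2 ^+ 2) * (2 * (a1 * v1 + a2 * v2) + (v1 ^+ 2 + v2 ^+ 2))
    + (u1 * v1 + u2 * v2) * (2 * (a1 * u1 + a2 * u2) + (u1 ^+ 2 + u2 ^+ 2)) by ring.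
  by rewrite H hu hv; ring.
have [U0|U0] := eqVneq (u1 ^+ 2 + u2 ^+ 2) 0.
  left; have h1 : u1 = 0 by nra. have h2 : u2 = 0 by nra.
  by congr pair; [move: h1; rewrite /u1 | move: h2; rewrite /u2]; lra.
have [V0|V0] := eqVneq (v1 ^+ 2 + v2 ^+ 2) 0.
  right; right; have h1 : v1 = 0 by nra. have h2 : v2 = 0 by nra.
  by congr pair; [move: h1; rewrite /v1 | move: h2; rewrite /v2]; lra.
move: g1 => /eqP; rewrite mulf_eq0 (negbTE V0) /= subr_eq0 => /eqP g1.
move: g2 => /eqP; rewrite mulf_eq0 (negbTE U0) /= subr_eq0 => /eqP g2.
right; left.
have h : (u1 - v1) ^+ 2 + (u2 - v2) ^+ 2 = 0.
  have : (u1 - v1) ^+ 2 + (u2 - v2) ^+ 2 = (u1 ^+ 2 + u2 ^+ 2) - 2 * (u1 * v1 + u2 * v2) + (v1 ^+ 2 + v2 ^+ 2) by ring.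
  by move=> ->; rewrite -g1 -g2; ring.
have [h1 h2] := sumsq0 _ _ h.
by congr pair; [move: h1; rewrite /u1 /v1 | move: h2; rewrite /u2 /v2]; lra.
Qed.

Lemma separate q q' : S1 R q -> S1 R q' -> q != q' -> exists b c,
  [/\ S1 R b, S1 R c, 0 < Dd q b c & Dd q' b c < 0].
Proof.
case: q => q1 q2; case: q' => p1 p2; rewrite /S1 /Dd /= => hq hp neq.
set n1 := - (q2 - p2); set n2 := q1 - p1.
set s := n1 ^+ 2 + n2 ^+ 2.
have s0 : 0 < s.
  rewrite /s /n1 /n2; have : (q1 - p1 != 0) || (q2 - p2 != 0).
    apply: contraT; rewrite negb_or !negbK !subr_eq0 => /andP[/eqP e1 /eqP e2].
    by move: neq; rewrite e1 e2 eqxx.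
  case/orP => h.
    have := sqr_ge0 (- (q2 - p2)); have : 0 < (q1 - p1) ^+ 2 by rewrite exprn_even_gt0. lra.
  have := sqr_ge0 (q1 - p1); have : 0 < (- (q2 - p2)) ^+ 2 by rewrite sqrrN exprn_even_gt0. lra.
set r := Num.sqrt s.
have r0 : 0 < r by rewrite sqrtr_gt0.
have rr : r ^+ 2 = s by rewrite sqr_sqrtr // ltW.
exists (n1 / r, n2 / r), (- (n1 / r), - (n2 / r)); split => /=.
- by rewrite !expr_div_n -mulrDl -/s rr divff // gt_eqF.
- by rewrite !sqrrN !expr_div_n -mulrDl -/s rr divff // gt_eqF.
- have -> : (n1 / r - q1) * (- (n2 / r) - q2) - (n2 / r - q2) * (- (n1 / r) - q1)
     = 2 * (q1 * n2 - q2 * n1) / r by field; rewrite gt_eqF.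
  apply: divr_gt0 => //; rewrite /n1 /n2.
  have : 0 < (q1 - p1) ^+ 2 + (q2 - p2) ^+ 2 by move: s0; rewrite /s /n1 /n2 sqrrN addrC.
  nra.
- have -> : (n1 / r - p1) * (- (n2 / r) - p2) - (n2 / r - p2) * (- (n1 / r) - p1)
     = 2 * (p1 * n2 - p2 * n1) / r by field; rewrite gt_eqF.
  rewrite -oppr_gt0 -mulNr; apply: divr_gt0 => //; rewrite /n1 /n2.
  have : 0 < (q1 - p1) ^+ 2 + (q2 - p2) ^+ 2 by move: s0; rewrite /s /n1 /n2 sqrrN addrC.
  nra.
Qed.
Lemma S1_closed : closed (S1 R).
Proof.
have gc : continuous (fun p : R * R => p.1 * p.1 + p.2 * p.2).
  move=> p; apply: (@continuousD _ _ _ (fun p : R * R => p.1 * p.1) (fun p : R * R => p.2 * p.2)).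
    by apply: (@continuousM _ _ (fun p : R * R => p.1) (fun p : R * R => p.1)); exact: cvg_fst.
  by apply: (@continuousM _ _ (fun p : R * R => p.2) (fun p : R * R => p.2)); exact: cvg_snd.
have -> : S1 R = (fun p : R * R => p.1 * p.1 + p.2 * p.2) @^-1` [set x | x = 1].
  by rewrite /S1; apply/seteqP; split=> p /=; rewrite !expr2.
by move/continuous_closedP : gc; apply; exact: closed_eq.
Qed.
Lemma S1_compact : compact (S1 R).
Proof.
apply: (@subclosed_compact _ _ (`[(-1 : R), 1] `*` `[(-1 : R), 1])); first exact: S1_closed.
  by apply: compact_setX; exact: segment_compact.
move=> p; rewrite /S1 /= => h; rewrite !in_itv /=.
by split; apply/andP; split; nra.
Qed.
End Geo.
Arguments Dd {R}.
Arguments orient_near {R}.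
Arguments circ_D0 {R}.
Arguments separate {R}.

Lemma cluster_S1 (R : realType) (G : set_system (R * R)) : ProperFilter G -> G (S1 R) ->
  exists q, S1 R q /\ forall A e, G A -> 0 < e -> exists z, A z /\ ball q e z.
Proof.
move=> PG GS; have [q [Sq cl]] := @S1_compact R G PG GS.
exists q; split => // A e GA e0.
have [z [Az Bz]] := cl A (ball q e) GA (nbhsx_ballx q e e0).
by exists z.
Qed.

Section Meas.
Variables (R : realType) (d : measure_display) (T : measurableType d).

Lemma mball (f : T -> R * R) : measurable_fun setT f ->
  forall z e, measurable (f @^-1` ball z e).
Proof.
move=> mf z e.
have -> : f @^-1` ball z e = ((fst \o f) @^-1` ball z.1 e) `&` ((snd \o f) @^-1` ball z.2 e).
  by apply/seteqP; split => x /=.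
apply: measurableI.
  have := (measurableT_comp measurable_fst mf) measurableT _ (measurable_ball z.1 e).
  by rewrite setTI.
have := (measurableT_comp measurable_snd mf) measurableT _ (measurable_ball z.2 e).
by rewrite setTI.
Qed.

Lemma mset1 (f : T -> R * R) : measurable_fun setT f ->
  forall z, measurable (f @^-1` [set z]).
Proof.
move=> mf z.
have -> : [set z] = [set z.1] `*` [set z.2].
  by apply/seteqP; split => [[a b]|[a b]] /=; [move=> <- |case: z => ? ? /= [-> ->]].
rewrite -[X in measurable X]setTI; apply: mf => //.
by apply: measurableX; exact: measurable_set1.
Qed.

Lemma ballR (x y r : R) : ball x r y = (`|x - y| < r).
Proof. by rewrite -ball_normE. Qed.

Lemma rat_near (x r : R) : 0 < r -> exists q : rat, `|ratr q - x| < r.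
Proof.
move=> r0; have : x - r < x + r by lra.
move/rat_in_itvoo => [q]; rewrite in_itv /= => /andP[h1 h2]; exists q.
by rewrite ltr_distl; apply/andP; split; lra.
Qed.

Definition cen (k : (rat * rat) * (rat * rat) * rat) : (R * R) * (R * R) :=
  ((ratr k.1.1.1, ratr k.1.1.2), (ratr k.1.2.1, ratr k.1.2.2)).
Definition rad (k : (rat * rat) * (rat * rat) * rat) : R := ratr k.2.

Lemma rat_ball (z : (R * R) * (R * R)) e : 0 < e ->
  exists k, ball (cen k) (rad k) z /\ ball (cen k) (rad k) `<=` ball z e.
Proof.
move=> e0.
have : e / 4 < e / 2 by lra.
move/rat_in_itvoo => [r]; rewrite in_itv /= => /andP[r1 r2].
have rp : 0 < (ratr r : R) by lra.
have [q1 h1] := rat_near z.1.1 _ rp.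
have [q2 h2] := rat_near z.1.2 _ rp.
have [q3 h3] := rat_near z.2.1 _ rp.
have [q4 h4] := rat_near z.2.2 _ rp.
exists ((q1, q2), (q3, q4), r); split.
  by rewrite /rad /cen; split; split => /=; rewrite ballR.
case: z h1 h2 h3 h4 => [[z1 z2] [z3 z4]] /= h1 h2 h3 h4 [[w1 w2] [w3 w4]].
rewrite /rad /cen => -[[k1 k2] [k3 k4]].
move: k1 k2 k3 k4; rewrite /= !ballR => k1 k2 k3 k4.
have tri : forall (a b c : R), `|a - b| < ratr r -> `|a - c| < ratr r -> `|b - c| < e.
  move=> a b c hab hac.
  have := ler_distD a b c; rewrite (distrC b a); lra.
by split; split; rewrite /= ballR; apply: tri; eassumption.
Qed.

Lemma open_ball_sub (z : (R * R) * (R * R)) (U : set ((R * R) * (R * R))) :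
  open U -> U z -> exists2 e, 0 < e & ball z e `<=` U.
Proof.
move=> oU Uz; have /nbhs_ballP[e e0 He] : nbhs z U by apply: open_nbhs_nbhs; split.
by exists e.
Qed.

Variables (P : probability T R) (phi psi : T -> R * R).
Hypotheses (mphi : measurable_fun setT phi) (mpsi : measurable_fun setT psi).
Definition Phi x := (phi x, psi x).
Definition FF := ess_image P Phi.

Lemma mPhiball z e : measurable (Phi @^-1` ball z e).
Proof.
have -> : Phi @^-1` ball z e = (phi @^-1` ball z.1 e) `&` (psi @^-1` ball z.2 e) by [].
by apply: measurableI; apply: mball.
Qed.

Lemma mPhiopen U : open U -> measurable (Phi @^-1` U).
Proof.
move=> oU.
have -> : Phi @^-1` U = \bigcup_k (if pselect (ball (cen k) (rad k) `<=` U)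
   then Phi @^-1` ball (cen k) (rad k) else set0).
  apply/seteqP; split => x /=.
    move=> Ux; have [e e0 He] := open_ball_sub _ _ oU Ux.
    have [k [k1 k2]] := rat_ball (Phi x) _ e0.
    exists k => //; destruct (pselect _) as [sub|nsub]; first exact: k1.
    by exfalso; apply: nsub; exact: (subset_trans k2 He).
  by move=> [k _]; destruct (pselect _) as [sub|] => //; apply: sub.
apply: countable_bigcupT_measurable; first exact: countableP.
by move=> k; destruct (pselect _); simpl; [exact: mPhiball|exact: measurable0].
Qed.

Lemma ess_ballP z : FF z <-> forall e, 0 < e -> (0 < P (Phi @^-1` ball z e))%E.
Proof.
split.
  by move=> Fz e e0; apply: Fz; [exact: ball_open | exact: ballxx].
move=> H U oU Uz; have [e e0 He] := open_ball_sub _ _ oU Uz.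
apply: (lt_le_trans (H e e0)); apply: le_measure; rewrite ?inE.
- exact: mPhiball.
- exact: mPhiopen.
- by move=> x; apply: He.
Qed.

Lemma P_eq0 (A : set T) : ~ (0 < P A)%E -> P A = 0%E.
Proof. by move=> h; apply/eqP; rewrite eq_le measure_ge0 andbT leNgt; apply/negP. Qed.

Lemma aeFF : P.-negligible (~` [set x | FF (Phi x)]).
Proof.
pose G (n : nat) : set T := match unpickle n with
  | Some k => if pselect (P (Phi @^-1` ball (cen k) (rad k)) = 0%E)
              then Phi @^-1` ball (cen k) (rad k) else set0
  | None => set0 end.
apply: (@negligibleS _ _ _ _ (\bigcup_n G n)).
  move=> x /= nF.
  have [e [e0 He]] : exists e, 0 < e /\ P (Phi @^-1` ball (Phi x) e) = 0%E.
    apply: contra_notP nF => H; apply/ess_ballP => e e0.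
    apply: contra_notP H => H; exists e; split => //; exact: P_eq0.
  have [k [k1 k2]] := rat_ball (Phi x) _ e0.
  exists (pickle k); first by [].
  rewrite /G (pickleK k).
  destruct (pselect _) as [s|n]; first exact: k1.
  exfalso; apply: n; apply: P_eq0; rewrite -He => H.
  have : (P (Phi @^-1` ball (cen k) (rad k)) <= P (Phi @^-1` ball (Phi x) e))%E.
    apply: le_measure; rewrite ?inE; [exact: mPhiball|exact: mPhiball|move=> y; apply: k2].
  by rewrite leNgt H.
apply: negligible_bigcup => n; rewrite /G.
case: (unpickle n) => [k|]; last exact: negligible_set0.
destruct (pselect _) as [s|n']; simpl; last exact: negligible_set0.
by apply/negligibleP => //; exact: mPhiball.
Qed.

Hypotheses (Sphi : forall x, S1 R (phi x)) (Spsi : forall x, S1 R (psi x)).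

Lemma ball_notS1 (p : R * R) : ~ S1 R p -> exists2 e, 0 < e & forall q, ball p e q -> ~ S1 R q.
Proof.
move=> np; have /nbhs_ballP[e e0 He] : nbhs p (~` S1 R).
  by apply: open_nbhs_nbhs; split => //; apply: closed_openC; exact: S1_closed.
by exists e.
Qed.

Lemma FF_S1 z : FF z -> S1 R z.1 /\ S1 R z.2.
Proof.
move=> Fz; move/ess_ballP : Fz => Fz.
split; apply: contrapT => nS.
  have [e e0 He] := ball_notS1 _ nS.
  have := Fz e e0; have -> : Phi @^-1` ball z e = set0.
    by apply/seteqP; split => x //= [h _]; exact: (He _ h (Sphi x)).
  by rewrite measure0 ltxx.
have [e e0 He] := ball_notS1 _ nS.
have := Fz e e0; have -> : Phi @^-1` ball z e = set0.
  by apply/seteqP; split => x //= [_ h]; exact: (He _ h (Spsi x)).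
by rewrite measure0 ltxx.
Qed.

Hypothesis ephi : ess_image P phi = S1 R.

Lemma exists_q p : S1 R p -> exists q, FF (p, q).
Proof.
move=> Sp.
pose G : set_system (R * R) := fun A => exists e, 0 < e /\ exists M,
  P.-negligible M /\ forall x, ball p e (phi x) -> ~ M x -> A (psi x).
have GF : Filter G.
  constructor.
  - exists 1; split => //; exists set0; split; first exact: negligible_set0.
    by [].
  - move=> A B [e1 [e10 [M1 [nM1 h1]]]] [e2 [e20 [M2 [nM2 h2]]]].
    exists (Order.min e1 e2); split; first by rewrite lt_min e10 e20.
    exists (M1 `|` M2); split; first exact: negligibleU.
    move=> x bx nM; split.
      by apply: h1 => [|?]; [apply: le_ball bx; rewrite ge_min lexx | apply: nM; left].
    by apply: h2 => [|?]; [apply: le_ball bx; rewrite ge_min lexx orbT | apply: nM; right].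
  - move=> A B AB [e [e0 [M [nM h]]]]; exists e; split => //; exists M; split => //.
    by move=> x bx nMx; apply: AB; exact: h.
have PG : ProperFilter G.
  apply: Build_ProperFilter => // -[e [e0 [M [nM h]]]].
  have pos : (0 < P (phi @^-1` ball p e))%E.
    have : ess_image P phi p by rewrite ephi.
    by apply; [exact: ball_open | exact: ballxx].
  have : P.-negligible (phi @^-1` ball p e).
    apply: negligibleS nM => x bx; apply: contrapT => nMx; exact: h bx nMx.
  by move/negligibleP => /(_ (mball _ mphi _ _)) h0; move: pos; rewrite h0 ltxx.
have GS : G (S1 R).
  exists 1; split => //; exists set0; split; first exact: negligible_set0.
  by move=> x _ _; exact: Spsi.
have [q [Sq cl]] := @cluster_S1 R G PG GS.
exists q; apply/ess_ballP => e e0; apply: contrapT => H.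
have H0 := P_eq0 _ H.
have GA : G (~` ball q e).
  exists e; split => //; exists (Phi @^-1` ball (p, q) e); split.
    by apply/negligibleP => //; exact: mPhiball.
  by move=> x bx nM bq; apply: nM; split.
have [z [nz bz]] := cl _ _ GA e0.
exact: nz bz.
Qed.

Hypothesis hae : {ae ((P \x P) \x P)%E, forall t : T * T * T,
     orient (phi t.1.1) (phi t.1.2) (phi t.2) =
     orient (psi t.1.1) (psi t.1.2) (psi t.2)}.

Lemma triple a a' b b' c c' : FF (a, a') -> FF (b, b') -> FF (c, c') ->
  Dd a b c != 0 -> Dd a' b' c' != 0 -> orient a b c = orient a' b' c'.
Proof.
move=> Fa Fb Fc D1 D2.
have [e1 [e10 H1]] := orient_near _ _ _ D1.
have [e2 [e20 H2]] := orient_near _ _ _ D2.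
set e := Order.min e1 e2.
have e0 : 0 < e by rewrite lt_min e10 e20.
have be1 : forall (u v : R * R), ball u e v -> ball u e1 v.
  by move=> u v; apply: le_ball; rewrite ge_min lexx.
have be2 : forall (u v : R * R), ball u e v -> ball u e2 v.
  by move=> u v; apply: le_ball; rewrite ge_min lexx orbT.
set A1 := Phi @^-1` ball (a, a') e.
set A2 := Phi @^-1` ball (b, b') e.
set A3 := Phi @^-1` ball (c, c') e.
have m1 : measurable A1 by exact: mPhiball.
have m2 : measurable A2 by exact: mPhiball.
have m3 : measurable A3 by exact: mPhiball.
have p1 : (0 < P A1)%E by move/ess_ballP : Fa; apply.
have p2 : (0 < P A2)%E by move/ess_ballP : Fb; apply.
have p3 : (0 < P A3)%E by move/ess_ballP : Fc; apply.
have pos : (0 < ((P \x P) \x P) (A1 `*` A2 `*` A3))%E.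
  rewrite (@product_measure1E _ _ _ _ R (P \x P)%E P (A1 `*` A2) A3) //; last exact: measurableX.
  apply: mule_gt0 => //.
  have h := mule_gt0 p1 p2.
  rewrite -(@product_measure1E _ _ _ _ R P P A1 A2 m1 m2) in h.
  exact: h.
case: hae => N [mN N0 sub].
have : ~ (A1 `*` A2 `*` A3 `<=` N).
  move=> AN.
  have N0' : ((P \x P) \x P)%E N = 0%E := N0.
  have hle : (((P \x P) \x P)%E (A1 `*` A2 `*` A3) <= ((P \x P) \x P)%E N)%E.
    apply: le_measure => //; rewrite inE //.
    exact: measurableX (measurableX m1 m2) m3.
  by move: hle; rewrite N0' leNgt pos.
move/existsNP => [[[x y] z]] /not_implyP [[[Ax Ay] Az] nN].
have good : orient (phi x) (phi y) (phi z) = orient (psi x) (psi y) (psi z).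
  by apply: contrapT => ng; apply: nN; apply: sub.
move: Ax Ay Az; rewrite /A1 /A2 /A3 /Phi /= => -[ax ax'] [ay ay'] [az az'].
rewrite -(H1 (phi x) (phi y) (phi z)); try by apply: be1.
by rewrite -(H2 (psi x) (psi y) (psi z)) //; apply: be2.
Qed.

Hypothesis epsi : ess_image P psi = S1 R.
Hypothesis nphi : forall p : R * R, P (phi @^-1` [set p]) = 0%E.

Lemma exists_good (A N : set T) : measurable A -> (0 < P A)%E -> P.-negligible N ->
  exists x, A x /\ ~ N x.
Proof.
move=> mA pA nN; apply: contrapT => H.
have : P.-negligible A.
  apply: negligibleS nN => x Ax; apply: contrapT => nNx; apply: H; exists x; split.
  by [].
  by [].
by move/negligibleP => /(_ mA) h0; move: pA; rewrite h0 ltxx.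
Qed.

Lemma unique p q q' : FF (p, q) -> FF (p, q') -> q = q'.
Proof.
move=> Fq Fq'; apply: contrapT => /eqP neq.
have [Sp Sq] := FF_S1 _ Fq.
have [_ Sq'] := FF_S1 _ Fq'.
have [b0 [c0 [Sb Sc Db Dc]]] := separate q q' Sq Sq' neq.
have D1 : Dd q b0 c0 != 0 by rewrite gt_eqF.
have D2 : Dd q' b0 c0 != 0 by rewrite lt_eqF.
have [e1 [e10 H1]] := orient_near _ _ _ D1.
have [e2 [e20 H2]] := orient_near _ _ _ D2.
set e := Order.min e1 e2.
have e0 : 0 < e by rewrite lt_min e10 e20.
have be1 : forall (u v : R * R), ball u e v -> ball u e1 v.
  by move=> u v; apply: le_ball; rewrite ge_min lexx.
have be2 : forall (u v : R * R), ball u e v -> ball u e2 v.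
  by move=> u v; apply: le_ball; rewrite ge_min lexx orbT.
have pos : forall z, S1 R z -> (0 < P (psi @^-1` ball z e))%E.
  move=> z Sz; have : ess_image P psi z by rewrite epsi.
  by apply; [exact: ball_open | exact: ballxx].
have np : forall z, P.-negligible (phi @^-1` [set z]).
  by move=> z; apply/negligibleP; [exact: mset1 | exact: nphi].
have [x [bx nx]] := exists_good _ _ (mball _ mpsi b0 e) (pos _ Sb) (negligibleU aeFF (np p)).
have [y [by_ ny]] := exists_good _ _ (mball _ mpsi c0 e) (pos _ Sc)
   (negligibleU (negligibleU aeFF (np p)) (np (phi x))).
have Fx : FF (phi x, psi x) by apply: contrapT => h; apply: nx; left.
have Fy : FF (phi y, psi y) by apply: contrapT => h; apply: ny; left; left.
have px : p <> phi x by move=> h; apply: nx; right.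
have py : p <> phi y by move=> h; apply: ny; left; right.
have xy : phi x <> phi y by move=> h; apply: ny; right.
have Dp : Dd p (phi x) (phi y) != 0.
  apply/eqP => h; have [|[|]] := circ_D0 _ _ _ Sp (Sphi x) (Sphi y) h.
  - exact: px.
  - exact: xy.
  - exact: py.
have o1 : orient q (psi x) (psi y) = 1.
  by rewrite (H1 _ _ _ (ballxx _ e10) (be1 _ _ bx) (be1 _ _ by_)) orientE gtr0_sg.
have o2 : orient q' (psi x) (psi y) = -1.
  by rewrite (H2 _ _ _ (ballxx _ e20) (be2 _ _ bx) (be2 _ _ by_)) orientE ltr0_sg.
have Dx1 : Dd q (psi x) (psi y) != 0.
  by apply/eqP => h; move: o1; rewrite orientE h sgr0 => /eqP; rewrite eq_sym oner_eq0.
have Dx2 : Dd q' (psi x) (psi y) != 0.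
  by apply/eqP => h; move: o2; rewrite orientE h sgr0 => /eqP; rewrite eq_sym oppr_eq0 oner_eq0.
have t1 := triple _ _ _ _ _ _ Fq Fx Fy Dp Dx1.
have t2 := triple _ _ _ _ _ _ Fq' Fx Fy Dp Dx2.
move: t1 t2; rewrite o1 o2 => -> /eqP; rewrite -subr_eq0 opprK.
by rewrite (_ : 1 + 1 = 2%:R :> R) // pnatr_eq0.
Qed.

Definition hh (p : R * R) : R * R := xget p [set q | FF (p, q)].

Lemma hh_F p : S1 R p -> FF (p, hh p).
Proof. by move=> Sp; exact: (xgetPex p (exists_q p Sp)). Qed.

Lemma hh_S1 p : S1 R p -> S1 R (hh p).
Proof. by move=> Sp; have [] := FF_S1 _ (hh_F _ Sp). Qed.

Lemma F_hh p q : FF (p, q) -> S1 R p /\ q = hh p.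
Proof.
move=> Fpq; have [Sp _] := FF_S1 _ Fpq; split => //.
exact: unique _ _ _ Fpq (hh_F _ Sp).
Qed.

Lemma hh_cont : {within S1 R, continuous hh}.
Proof.
apply/subspace_continuousP => p Sp; apply/cvg_ballP => e e0.
apply: contrapT => H.
pose G : set_system (R * R) := fun A => exists dl, 0 < dl /\
  forall y, S1 R y -> ball p dl y -> ~ ball (hh p) e (hh y) -> A (hh y).
have GF : Filter G.
  constructor.
  - by exists 1; split.
  - move=> A B [d1 [d10 h1]] [d2 [d20 h2]].
    exists (Order.min d1 d2); split; first by rewrite lt_min d10 d20.
    move=> y Sy bpy nb; split.
      by apply: h1 => //; apply: le_ball bpy; rewrite ge_min lexx.
    by apply: h2 => //; apply: le_ball bpy; rewrite ge_min lexx orbT.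
  - move=> A B AB [dl [dl0 h]]; exists dl; split => //.
    by move=> y Sy bpy nb; apply: AB; exact: h.
have PG : ProperFilter G.
  apply: Build_ProperFilter => // -[dl [dl0 h]].
  apply: H; rewrite /within /=; apply/nbhs_ballP; exists dl => // y bpy Sy.
  by apply: contrapT => nb; exact: (h y Sy bpy nb).
have GS : G (S1 R) by exists 1; split => // y Sy _ _; exact: hh_S1.
have [q [Sq cl]] := @cluster_S1 R G PG GS.
have Fpq : FF (p, q).
  apply/ess_ballP => eps eps0.
  have eps20 : 0 < eps / 2 by rewrite divr_gt0.
  have GA : G [set z | exists y, [/\ S1 R y, ball p (eps / 2) y & z = hh y]].
    by exists (eps / 2); split => // y Sy bpy _; exists y.
  have [z [[y [Sy bpy ->]] bqz]] := cl _ _ GA eps20.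
  have := (ess_ballP _).1 (hh_F _ Sy) _ eps20.
  move=> /lt_le_trans; apply; apply: le_measure; rewrite ?inE; try exact: mPhiball.
  move=> x [/= b1 b2]; split => /=.
    by rewrite (splitr eps); apply: ball_triangle bpy b1.
  by rewrite (splitr eps); apply: ball_triangle bqz b2.
have [_ qh] := F_hh _ _ Fpq.
have GC : G (~` ball (hh p) e) by exists 1; split => // y _ _ nb.
have [z [nz bz]] := cl _ _ GC e0.
by apply: nz; rewrite -qh.
Qed.

Lemma summary : exists h : R * R -> R * R,
  [/\ (forall p, S1 R p -> S1 R (h p)), {within S1 R, continuous h},
      (forall z, ess_image P (fun x => (phi x, psi x)) z <-> (S1 R z.1 /\ z.2 = h z.1)),
      {ae P, forall x, h (phi x) = psi x} &
      (forall a b c, S1 R a -> S1 R b -> S1 R c -> Dd a b c != 0 ->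
         Dd (h a) (h b) (h c) != 0 -> orient (h a) (h b) (h c) = orient a b c)].
Proof.
exists hh; split.
- exact: hh_S1.
- exact: hh_cont.
- case=> p q /=; split; first exact: F_hh.
  by move=> [Sp ->]; exact: hh_F.
- apply: negligibleS aeFF => x /= nh; apply: contrapT => Fx; apply: nh.
  by have [_ ->] := F_hh _ _ (contrapT Fx).
- move=> a b c Sa Sb Sc D1 D2; symmetry.
  exact: (triple _ _ _ _ _ _ (hh_F _ Sa) (hh_F _ Sb) (hh_F _ Sc) D1 D2).
Qed.
End Meas.

Lemma ess_swap (R : realType) (d : measure_display) (T : measurableType d)
  (P : probability T R) (phi psi : T -> R * R) :
  measurable_fun setT phi -> measurable_fun setT psi -> forall a b,
  ess_image P (fun x => (psi x, phi x)) (b, a) <-> ess_image P (fun x => (phi x, psi x)) (a, b).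
Proof.
move=> mphi mpsi a b.
have E : forall e, (fun x => (psi x, phi x)) @^-1` ball (b, a) e = (fun x => (phi x, psi x)) @^-1` ball (a, b) e.
  by move=> e; apply/seteqP; split => x /= [h1 h2]; split.
split => H.
  apply/(ess_ballP _ _ _ P phi psi mphi mpsi (a, b)) => e e0; rewrite /Phi -E.
  by move/(ess_ballP _ _ _ P psi phi mpsi mphi (b, a)) : H; apply.
apply/(ess_ballP _ _ _ P psi phi mpsi mphi (b, a)) => e e0; rewrite /Phi E.
by move/(ess_ballP _ _ _ P phi psi mphi mpsi (a, b)) : H; apply.
Qed.

Lemma Dd_eq12 (R : realType) (a c : R * R) : Dd a a c = 0.
Proof. by rewrite /Dd !subrr !mul0r subrr. Qed.
Lemma Dd_eq23 (R : realType) (a b : R * R) : Dd a b b = 0.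
Proof. by rewrite /Dd; ring. Qed.
Lemma Dd_eq13 (R : realType) (a b : R * R) : Dd a b a = 0.
Proof. by rewrite /Dd !subrr !mulr0 subrr. Qed.


Theorem lemma4p13 (R : realType) (d : measure_display) (T : measurableType d)
  (P : probability T R) (phi psi : T -> R * R) :
  measurable_fun setT phi -> measurable_fun setT psi ->
  (forall x, S1 R (phi x)) -> (forall x, S1 R (psi x)) ->
  (forall p : R * R, P (phi @^-1` [set p]) = 0%E) ->
  (forall p : R * R, P (psi @^-1` [set p]) = 0%E) ->
  ess_image P phi = S1 R -> ess_image P psi = S1 R ->
  {ae ((P \x P) \x P)%E, forall t : T * T * T,
     orient (phi t.1.1) (phi t.1.2) (phi t.2) =
     orient (psi t.1.1) (psi t.1.2) (psi t.2)} ->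
  exists h : R * R -> R * R,
    [/\ S1_homeo h, S1_orientation_preserving h,
        ess_image P (fun x => (phi x, psi x)) = [set (p, h p) | p in S1 R] &
        {ae P, forall x, h (phi x) = psi x}].
Proof.
move=> mphi mpsi Sphi Spsi nphi npsi ephi epsi hae.
have [h [hS hc hF hae1 hor]] := summary _ _ _ P phi psi mphi mpsi Sphi Spsi ephi hae epsi nphi.
have hae' : {ae ((P \x P) \x P)%E, forall t : T * T * T,
     orient (psi t.1.1) (psi t.1.2) (psi t.2) =
     orient (phi t.1.1) (phi t.1.2) (phi t.2)}.
  move: hae; rewrite /almost_everywhere => -[N [mN N0 sub]]; exists N; split => //.
  move=> t /= nt; apply: sub => /= et; apply: nt; by rewrite et.
have [g [gS gc gF _ _]] := summary _ _ _ P psi phi mpsi mphi Spsi Sphi epsi hae' ephi npsi.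
have gh : forall p, S1 R p -> g (h p) = p.
  move=> p Sp; have Fp : ess_image P (fun x => (phi x, psi x)) (p, h p) by apply/hF.
  have := (ess_swap _ _ _ P phi psi mphi mpsi p (h p)).2 Fp.
  by move/gF => [_ /= e]; rewrite -e.
have hg : forall q, S1 R q -> h (g q) = q.
  move=> q Sq; have Fq : ess_image P (fun x => (psi x, phi x)) (q, g q) by apply/gF.
  have := (ess_swap _ _ _ P phi psi mphi mpsi (g q) q).1 Fq.
  by move/hF => [_ /= e]; rewrite -e.
exists h; split.
- split => //; split => //; exists g; split => //.
- move=> a b c Sa Sb Sc.
  have [D0|D0] := eqVneq (Dd a b c) 0.
    rewrite [RHS]orientE D0 orientE.
    have [->|[->|->]] := circ_D0 _ _ _ Sa Sb Sc D0.
    + by rewrite Dd_eq12.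
    + by rewrite Dd_eq23.
    + by rewrite Dd_eq13.
  apply: hor => //; apply/eqP => D1.
  have [e|[e|e]] := circ_D0 _ _ _ (hS _ Sa) (hS _ Sb) (hS _ Sc) D1.
  + by move: D0; rewrite -(gh _ Sa) -(gh _ Sb) e Dd_eq12 eqxx.
  + by move: D0; rewrite -(gh _ Sb) -(gh _ Sc) e Dd_eq23 eqxx.
  + by move: D0; rewrite -(gh _ Sa) -(gh _ Sc) e Dd_eq13 eqxx.
- apply/seteqP; split => z.
    by move/hF => [Sz hz]; exists z.1 => //; case: z hz Sz => /= p q ->.
  by move=> [p Sp <-]; apply/hF.
- exact: hae1.
Qed.
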